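(* Let $F(\alpha,\beta)=\frac{1}{\sqrt2}(\gamma(\beta)e^{i\alpha},\gamma(\beta)e^{-i\alpha})$ on $S^1\times S^1$. Then $F$ is a Lagrangian immersion. If $F(\alpha_1,\beta_1)=F(\alpha_2,\beta_2)$ with $(\alpha_1,\beta_1)\neq(\alpha_2,\beta_2)$, then $\rho(\beta_1)=\rho(\beta_2)$, $f(\beta_1)\equiv f(\beta_2)+\pi\pmod{2\pi}$ and $\alpha_1\equiv\alpha_2+\pi\pmod{2\pi}$; each of $(\alpha_1,\beta_1)$ and $(\alpha_2,\beta_2)$ determines the other uniquely, so every self-intersection point of $L_\gamma$ is a double point. At such a double point $\partial_\alpha F(\alpha_1,\beta_1)=\partial_\alpha F(\alpha_2,\beta_2)$, so the self-intersection is never transversal; the two sheets are tangent (span a common $2$-plane) if and only if $\dot\gamma(\beta_1)$ and $\dot\gamma(\beta_2)$ are parallel.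
   Context: Let $\gamma:S^1=\mathbb{R}/2\pi\mathbb{Z}\to\mathbb{C}\setminus\{0\}$ be a smooth regular simple closed curve written as $\gamma(\beta)=\rho(\beta)e^{if(\beta)}$ with $\rho>0$. $\mathbb{C}^2$ carries the standard symplectic form $\frac i2(dz_1\wedge d\bar z_1+dz_2\wedge d\bar z_2)$ and Euclidean metric. $L_\gamma=F(S^1\times S^1)$. *)

(* Defs.v *)
From Stdlib Require Import Reals ZArith.
From Coquelicot Require Import Coquelicot.

Open Scope R_scope.

Definition cis (t : R) : C := (cos t, sin t).

Definition C2 := (C * C)%type.

Definition F_of (gamma : R -> C) (a b : R) : C2 :=
  ((RtoC (/ sqrt 2) * gamma b * cis a)%C,
   (RtoC (/ sqrt 2) * gamma b * cis (- a))%C).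

(* F viewed as a map on (the universal cover R x R of) S^1 x S^1 *)
Definition Fmap (gamma : R -> C) (p : R * R) : C2 := F_of gamma (fst p) (snd p).

Definition cong2pi (x y : R) : Prop := exists k : Z, x = y + 2 * PI * IZR k.

Definition torus_eq (p q : R * R) : Prop :=
  cong2pi (fst p) (fst q) /\ cong2pi (snd p) (snd q).

(* standard symplectic form (i/2)(dz1 ^ dz1bar + dz2 ^ dz2bar)
   = dx1 ^ dy1 + dx2 ^ dy2 on C^2 *)
Definition omega (u v : C2) : R :=
  Im (Cconj (fst u) * fst v)%C + Im (Cconj (snd u) * snd v)%C.

Definition C2zero : C2 := (RtoC 0, RtoC 0).
Definition c2add (x y : C2) : C2 := ((fst x + fst y)%C, (snd x + snd y)%C).

(* G : R^2 -> C^2 is a Lagrangian immersion: at every point it is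
   (Frechet) differentiable with injective differential whose image is
   isotropic for omega (hence Lagrangian, being 2-dimensional in C^2 = R^4). *)
Definition lagrangian_immersion (G : R * R -> C2) : Prop :=
  forall p : R * R, exists L : R * R -> C2,
    filterdiff G (locally p) L /\
    (forall u : R * R, L u = C2zero -> u = (0, 0)) /\
    (forall u v : R * R, omega (L u) (L v) = 0).

Definition in_image (L : R * R -> C2) (w : C2) : Prop := exists u, w = L u.

Definition same_plane (L1 L2 : R * R -> C2) : Prop :=
  forall w, in_image L1 w <-> in_image L2 w.

Definition transversal (L1 L2 : R * R -> C2) : Prop :=
  forall w : C2, exists u v : R * R, w = c2add (L1 u) (L2 v).

Definition Rparallel (u v : C) : Prop :=
  exists a b : R, (a <> 0 \/ b <> 0) /\ (RtoC a * u + RtoC b * v)%C = RtoC 0.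

Definition smooth_R (h : R -> R) : Prop := forall (n : nat) (x : R), ex_derive_n h n x.
Definition smooth_C (g : R -> C) : Prop :=
  smooth_R (fun t => fst (g t)) /\ smooth_R (fun t => snd (g t)).

(* Main.v *)
Require Import Defs.
From Stdlib Require Import Reals ZArith Lra Psatz.
From Coquelicot Require Import Coquelicot.
Open Scope R_scope.

Lemma fd_snd (g dg : R -> R) (p : R * R) :
  (forall t, is_derive g t (dg t)) ->
  filterdiff (fun q : R * R => g (snd q)) (locally p) (fun u : R * R => snd u * dg (snd p)).
Proof.
  intros Hg.
  pose proof (filterdiff_comp' (fun q : R * R => snd q) g p _ _
     (filterdiff_linear _ (@is_linear_snd R_AbsRing R_NormedModule R_NormedModule)) (Hg (snd p))) as H.
  eapply filterdiff_ext_lin. exact H.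
  intros y. reflexivity.
Qed.

Lemma fd_fst (g dg : R -> R) (p : R * R) :
  (forall t, is_derive g t (dg t)) ->
  filterdiff (fun q : R * R => g (fst q)) (locally p) (fun u : R * R => fst u * dg (fst p)).
Proof.
  intros Hg.
  pose proof (filterdiff_comp' (fun q : R * R => fst q) g p _ _
     (filterdiff_linear _ (@is_linear_fst R_AbsRing R_NormedModule R_NormedModule)) (Hg (fst p))) as H.
  eapply filterdiff_ext_lin. exact H.
  intros y. reflexivity.
Qed.

Lemma fdcomp (g1 g2 h1 h2 dg1 dg2 dh1 dh2 : R -> R) (p : R*R) :
  (forall t, is_derive g1 t (dg1 t)) -> (forall t, is_derive g2 t (dg2 t)) ->
  (forall t, is_derive h1 t (dh1 t)) -> (forall t, is_derive h2 t (dh2 t)) ->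
  filterdiff (fun q : R*R => g1 (snd q) * h1 (fst q) + g2 (snd q) * h2 (fst q)) (locally p)
   (fun u : R*R => fst u * (g1 (snd p) * dh1 (fst p) + g2 (snd p) * dh2 (fst p))
                 + snd u * (dg1 (snd p) * h1 (fst p) + dg2 (snd p) * h2 (fst p))).
Proof.
  intros H1 H2 H3 H4.
  assert (Hc : forall n m : R_AbsRing, mult n m = mult m n) by (intros; apply Rmult_comm).
  pose proof (filterdiff_mult_fct _ _ p _ _ Hc (fd_snd g1 dg1 p H1) (fd_fst h1 dh1 p H3)) as M1.
  pose proof (filterdiff_mult_fct _ _ p _ _ Hc (fd_snd g2 dg2 p H2) (fd_fst h2 dh2 p H4)) as M2.
  pose proof (filterdiff_plus_fct _ _ _ _ M1 M2) as M.
  eapply filterdiff_ext_lin.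
  eapply filterdiff_ext. 2: exact M.
  intros y. reflexivity.
  intros y. simpl. unfold plus, mult; simpl. ring.
Qed.

Lemma fd_pair {U V W : NormedModule R_AbsRing} (f : U -> V) (g : U -> W) (x : U) lf lg :
  filterdiff f (locally x) lf -> filterdiff g (locally x) lg ->
  filterdiff (fun y => (f y, g y)) (locally x) (fun y => (lf y, lg y)).
Proof.
  intros Hf Hg.
  apply (filterdiff_comp'_2 f g (fun a b => (a, b)) x lf lg (fun a b => (a, b)) Hf Hg).
  apply (filterdiff_linear (fun t : prod_NormedModule R_AbsRing V W => (fst t, snd t))).
  apply is_linear_prod. apply is_linear_fst. apply is_linear_snd.
Qed.

Definition s2 := / sqrt 2.
Definition gx (gamma : R -> C) t := fst (gamma t).
Definition gy (gamma : R -> C) t := snd (gamma t).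

Definition Lexp (gamma : R -> C) (p : R * R) (u : R * R) : C2 :=
  let a := fst p in let b := snd p in
  let X := gx gamma b in let Y := gy gamma b in
  let DX := Derive (gx gamma) b in let DY := Derive (gy gamma) b in
  let c := cos a in let sn := sin a in
  ((fst u * (s2*X*(-sn) + (-(s2*Y))*c) + snd u * (s2*DX*c + (-(s2*DY))*sn),
    fst u * (s2*X*c + (s2*Y)*(-sn)) + snd u * (s2*DX*sn + (s2*DY)*c)),
   (fst u * (s2*X*(-sn) + (s2*Y)*c) + snd u * (s2*DX*c + (s2*DY)*sn),
    fst u * (s2*Y*(-sn) + (-(s2*X))*c) + snd u * (s2*DY*c + (-(s2*DX))*sn))).

Lemma Fmap_eq gamma (q : R * R) : Fmap gamma q =
  let a := fst q in let b := snd q in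
  ((s2 * gx gamma b * cos a + (- (s2 * gy gamma b)) * sin a,
    s2 * gx gamma b * sin a + s2 * gy gamma b * cos a),
   (s2 * gx gamma b * cos a + s2 * gy gamma b * sin a,
    s2 * gy gamma b * cos a + (- (s2 * gx gamma b)) * sin a)).
Proof.
  destruct q as [a b]. unfold Fmap, F_of, cis, gx, gy, s2. simpl.
  destruct (gamma b) as [x y]. simpl. rewrite cos_neg, sin_neg.
  unfold Cmult; simpl. f_equal; f_equal; ring.
Qed.

Lemma der_of_smooth h : smooth_R h -> forall t, is_derive h t (Derive h t).
Proof. intros H t. apply Derive_correct. exact (H 1%nat t). Qed.

Lemma F_diff gamma (p : R * R) : smooth_C gamma ->
  filterdiff (Fmap gamma) (locally p) (Lexp gamma p).
Proof.
  intros [Hx Hy].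
  assert (DX := der_of_smooth _ Hx). assert (DY := der_of_smooth _ Hy).
  assert (HX : forall t, is_derive (fun t => s2 * gx gamma t) t (s2 * Derive (gx gamma) t)).
  { intros t. apply is_derive_scal. apply DX. }
  assert (HY : forall t, is_derive (fun t => s2 * gy gamma t) t (s2 * Derive (gy gamma) t)).
  { intros t. apply is_derive_scal. apply DY. }
  assert (HXn : forall t, is_derive (fun t => - (s2 * gx gamma t)) t (- (s2 * Derive (gx gamma) t))).
  { intros t. apply (is_derive_opp (fun t => s2 * gx gamma t)). apply HX. }
  assert (HYn : forall t, is_derive (fun t => - (s2 * gy gamma t)) t (- (s2 * Derive (gy gamma) t))).
  { intros t. apply (is_derive_opp (fun t => s2 * gy gamma t)). apply HY. }
  assert (Hc : forall t, is_derive cos t (- sin t)).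
  { intros t. auto_derive; auto; ring. }
  assert (Hs : forall t, is_derive sin t (cos t)).
  { intros t. auto_derive; auto; ring. }
  pose proof (fdcomp _ _ _ _ _ _ _ _ p HX HYn Hc Hs) as C1.
  pose proof (fdcomp _ _ _ _ _ _ _ _ p HX HY Hs Hc) as C2.
  pose proof (fdcomp _ _ _ _ _ _ _ _ p HX HY Hc Hs) as C3.
  pose proof (fdcomp _ _ _ _ _ _ _ _ p HY HXn Hc Hs) as C4.
  pose proof (fd_pair _ _ _ _ _ (fd_pair _ _ _ _ _ C1 C2) (fd_pair _ _ _ _ _ C3 C4)) as H.
  eapply filterdiff_ext_lin.
  eapply filterdiff_ext. 2: exact H.
  intros q. rewrite Fmap_eq. reflexivity.
  intros u. reflexivity.
Qed.

Lemma isd_fst {U V : NormedModule R_AbsRing} (h : R -> U * V) t l :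
  is_derive h t l -> is_derive (fun s => fst (h s)) t (fst l).
Proof.
  intros H. unfold is_derive in *.
  pose proof (filterdiff_comp' h (fun z : prod_NormedModule R_AbsRing U V => fst z) t _ _ H
     (filterdiff_linear _ (@is_linear_fst R_AbsRing U V))) as H2.
  eapply filterdiff_ext_lin. exact H2. intros y. reflexivity.
Qed.

Lemma isd_snd {U V : NormedModule R_AbsRing} (h : R -> U * V) t l :
  is_derive h t l -> is_derive (fun s => snd (h s)) t (snd l).
Proof.
  intros H. unfold is_derive in *.
  pose proof (filterdiff_comp' h (fun z : prod_NormedModule R_AbsRing U V => snd z) t _ _ H
     (filterdiff_linear _ (@is_linear_snd R_AbsRing U V))) as H2.
  eapply filterdiff_ext_lin. exact H2. intros y. reflexivity.
Qed.

Lemma uniq_R2 (h : R -> R * R) t l1 l2 : is_derive h t l1 -> is_derive h t l2 -> l1 = l2.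
Proof.
  intros H1 H2. destruct l1 as [a b], l2 as [c d].
  pose proof (is_derive_unique _ _ _ (isd_fst h t _ H1)) as E1.
  pose proof (is_derive_unique _ _ _ (isd_fst h t _ H2)) as E2.
  pose proof (is_derive_unique _ _ _ (isd_snd h t _ H1)) as E3.
  pose proof (is_derive_unique _ _ _ (isd_snd h t _ H2)) as E4.
  simpl in *. congruence.
Qed.

Lemma uniq_C2 (h : R -> C2) t l1 l2 : is_derive h t l1 -> is_derive h t l2 -> l1 = l2.
Proof.
  intros H1 H2. destruct l1 as [a b], l2 as [c d].
  pose proof (uniq_R2 _ _ _ _ (isd_fst h t _ H1) (isd_fst h t _ H2)).
  pose proof (uniq_R2 _ _ _ _ (isd_snd h t _ H1) (isd_snd h t _ H2)).
  simpl in *. congruence.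
Qed.

Lemma dir_der (G : R * R -> C2) p L : filterdiff G (locally p) L ->
  forall u : R * R, is_derive (fun t => G (fst p + t * fst u, snd p + t * snd u)) 0 (L u).
Proof.
  intros H u.
  assert (Hf : filterdiff (fun t : R => (fst p + t * fst u, snd p + t * snd u)) (locally 0)
                 (fun t : R => (t * fst u, t * snd u))).
  { apply (@fd_pair R_NormedModule R_NormedModule R_NormedModule (fun t => fst p + t * fst u) (fun t => snd p + t * snd u) 0 (fun t => t * fst u) (fun t => t * snd u)).
    - eapply filterdiff_ext_lin.
      assert (is_derive (fun t => fst p + t * fst u) 0 (fst u)) by (auto_derive; auto; ring).
      exact H0. intros y. reflexivity.
    - eapply filterdiff_ext_lin.
      assert (is_derive (fun t => snd p + t * snd u) 0 (snd u)) by (auto_derive; auto; ring).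
      exact H0. intros y. reflexivity. }
  assert (H' : filterdiff G (locally (fst p + 0 * fst u, snd p + 0 * snd u)) L).
  { replace (fst p + 0 * fst u, snd p + 0 * snd u) with p. exact H.
    destruct p as [p1 p2]; simpl. rewrite !Rmult_0_l, !Rplus_0_r. reflexivity. }
  pose proof (filterdiff_comp' _ G 0 _ _ Hf H') as H2.
  unfold is_derive. eapply filterdiff_ext_lin. exact H2.
  intros y. simpl.
  destruct H as [Hlin _].
  rewrite <- (linear_scal L Hlin). reflexivity.
Qed.

Lemma F_uniq gamma p L : smooth_C gamma -> filterdiff (Fmap gamma) (locally p) L ->
  forall u, L u = Lexp gamma p u.
Proof.
  intros Hs H u.
  apply (uniq_C2 _ _ _ _ (dir_der _ _ _ H u) (dir_der _ _ _ (F_diff gamma p Hs) u)).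
Qed.

Lemma sc1 x : cos x * cos x + sin x * sin x = 1.
Proof. pose proof (sin2_cos2 x). unfold Rsqr in H. lra. Qed.

Lemma cong_of_cossin a b : cos a = cos b -> sin a = sin b -> cong2pi a b.
Proof.
  intros Hc Hs.
  assert (Hd : cos (a - b) = 1).
  { rewrite cos_minus, Hc, Hs. apply sc1. }
  replace (a - b) with (2 * ((a - b) / 2)) in Hd by field.
  rewrite cos_2a_sin in Hd.
  assert (Hz : sin ((a - b) / 2) = 0) by nra.
  destruct (sin_eq_0_0 _ Hz) as [k Hk].
  exists k. lra.
Qed.

Lemma nz_cancel X Y z : 0 < X*X+Y*Y -> X*z = 0 -> Y*z = 0 -> z = 0.
Proof.
  intros H H1 H2.
  assert (E : (X*X+Y*Y)*z = 0).
  { replace ((X*X+Y*Y)*z) with (X*(X*z)+Y*(Y*z)) by ring. rewrite H1, H2. ring. }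
  destruct (Rmult_integral _ _ E); lra.
Qed.

Lemma alg_core X1 Y1 c1 s1 X2 Y2 c2 s2 :
  c1*c1+s1*s1 = 1 -> c2*c2+s2*s2 = 1 -> 0 < X1*X1+Y1*Y1 -> 0 < X2*X2+Y2*Y2 ->
  X1*c1 = X2*c2 -> X1*s1 = X2*s2 -> Y1*c1 = Y2*c2 -> Y1*s1 = Y2*s2 ->
  (X1 = X2 /\ Y1 = Y2 /\ c1 = c2 /\ s1 = s2) \/
  (X2 = -X1 /\ Y2 = -Y1 /\ c2 = -c1 /\ s2 = -s1).
Proof.
  intros T1 T2 P1 P2 E1 E2 E3 E4.
  assert (QX : X1*X1 = X2*X2).
  { transitivity ((X1*c1)*(X1*c1) + (X1*s1)*(X1*s1)).
    { rewrite <- (Rmult_1_r (X1*X1)); rewrite <- T1; ring. }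
    rewrite E1, E2. rewrite <- (Rmult_1_r (X2*X2)). rewrite <- T2. ring. }
  assert (QY : Y1*Y1 = Y2*Y2).
  { transitivity ((Y1*c1)*(Y1*c1) + (Y1*s1)*(Y1*s1)).
    { rewrite <- (Rmult_1_r (Y1*Y1)); rewrite <- T1; ring. }
    rewrite E3, E4. rewrite <- (Rmult_1_r (Y2*Y2)). rewrite <- T2. ring. }
  assert (QXY : X1*Y1 = X2*Y2).
  { transitivity ((X1*c1)*(Y1*c1) + (X1*s1)*(Y1*s1)).
    { rewrite <- (Rmult_1_r (X1*Y1)); rewrite <- T1; ring. }
    rewrite E1, E2, E3, E4. rewrite <- (Rmult_1_r (X2*Y2)). rewrite <- T2. ring. }
  assert (HX : X1 = X2 \/ X1 = - X2).
  { assert (E : (X1 - X2) * (X1 + X2) = 0) by (ring_simplify; lra).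
    destruct (Rmult_integral _ _ E); [left|right]; lra. }
  assert (HY : Y1 = Y2 \/ Y1 = - Y2).
  { assert (E : (Y1 - Y2) * (Y1 + Y2) = 0) by (ring_simplify; lra).
    destruct (Rmult_integral _ _ E); [left|right]; lra. }
  assert (Hcase : (X1 = X2 /\ Y1 = Y2) \/ (X1 = -X2 /\ Y1 = -Y2)).
  { destruct HX as [HX|HX], HY as [HY|HY]; auto.
    - subst. assert (E : X2 * Y2 = 0) by lra.
      destruct (Rmult_integral _ _ E); [right|left]; split; lra.
    - subst. assert (E : X2 * Y2 = 0) by lra.
      destruct (Rmult_integral _ _ E); [left|right]; split; lra. }
  destruct Hcase as [[A B]|[A B]]; subst.
  - left. repeat split; auto.
    + assert (c1 - c2 = 0); [|lra]. apply (nz_cancel X2 Y2); auto; lra.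
    + assert (s1 - s2 = 0); [|lra]. apply (nz_cancel X2 Y2); auto; lra.
  - right. repeat split; try ring.
    + assert (c1 + c2 = 0); [|lra]. apply (nz_cancel X2 Y2); auto; lra.
    + assert (s1 + s2 = 0); [|lra]. apply (nz_cancel X2 Y2); auto; lra.
Qed.

Lemma s2_pos : 0 < s2.
Proof. unfold s2. apply Rinv_0_lt_compat, sqrt_lt_R0. lra. Qed.

Lemma gamma_der gamma b : smooth_C gamma ->
  is_derive gamma b (Derive (gx gamma) b, Derive (gy gamma) b).
Proof.
  intros [Hx Hy].
  pose proof (@fd_pair R_NormedModule R_NormedModule R_NormedModule _ _ b _ _
     (der_of_smooth _ Hx b) (der_of_smooth _ Hy b)) as H.
  unfold is_derive. eapply filterdiff_ext_lin.
  eapply filterdiff_ext. 2: exact H.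
  intros y. simpl. symmetry. apply surjective_pairing.
  intros y. reflexivity.
Qed.

Lemma polar_xy gamma rho f b :
  (forall b, gamma b = (RtoC (rho b) * cis (f b))%C) ->
  gx gamma b = rho b * cos (f b) /\ gy gamma b = rho b * sin (f b).
Proof.
  intros H. unfold gx, gy. rewrite H. unfold cis, Cmult, RtoC. simpl. split; ring.
Qed.

Lemma gam_nz gamma rho f b :
  (forall b, 0 < rho b) -> (forall b, gamma b = (RtoC (rho b) * cis (f b))%C) ->
  0 < gx gamma b * gx gamma b + gy gamma b * gy gamma b.
Proof.
  intros Hp H. destruct (polar_xy gamma rho f b H) as [E1 E2]. rewrite E1, E2.
  replace (rho b * cos (f b) * (rho b * cos (f b)) + rho b * sin (f b) * (rho b * sin (f b)))
    with (rho b * rho b * (cos (f b) * cos (f b) + sin (f b) * sin (f b))) by ring.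
  rewrite sc1. specialize (Hp b). nra.
Qed.

Lemma F_eq_comps gamma a1 b1 a2 b2 : Fmap gamma (a1, b1) = Fmap gamma (a2, b2) ->
  gx gamma b1 * cos a1 = gx gamma b2 * cos a2 /\ gx gamma b1 * sin a1 = gx gamma b2 * sin a2 /\
  gy gamma b1 * cos a1 = gy gamma b2 * cos a2 /\ gy gamma b1 * sin a1 = gy gamma b2 * sin a2.
Proof.
  rewrite !Fmap_eq. simpl. intros H. injection H. intros H4 H3 H2 H1.
  pose proof s2_pos as Hk.
  set (X1 := gx gamma b1) in *. set (X2 := gx gamma b2) in *.
  set (Y1 := gy gamma b1) in *. set (Y2 := gy gamma b2) in *.
  repeat split; apply (Rmult_eq_reg_l (2 * s2)); try lra; ring_simplify; nra.
Qed.

Lemma selfint gamma rho f a1 b1 a2 b2 :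
  (forall b1 b2 : R, gamma b1 = gamma b2 -> cong2pi b1 b2) ->
  (forall b, 0 < rho b) -> (forall b, gamma b = (RtoC (rho b) * cis (f b))%C) ->
  Fmap gamma (a1, b1) = Fmap gamma (a2, b2) -> ~ torus_eq (a1, b1) (a2, b2) ->
  gx gamma b2 = - gx gamma b1 /\ gy gamma b2 = - gy gamma b1 /\
  cos a2 = - cos a1 /\ sin a2 = - sin a1.
Proof.
  intros Hs Hp Hpol HF HT.
  destruct (F_eq_comps _ _ _ _ _ HF) as (E1 & E2 & E3 & E4).
  destruct (alg_core _ _ _ _ _ _ _ _ (sc1 a1) (sc1 a2) (gam_nz gamma rho f b1 Hp Hpol)
              (gam_nz gamma rho f b2 Hp Hpol) E1 E2 E3 E4) as [(A&B&C&D)|H]; [|exact H].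
  exfalso. apply HT. split; simpl.
  - apply cong_of_cossin; auto.
  - apply Hs. unfold gx, gy in *.
    rewrite (surjective_pairing (gamma b1)), (surjective_pairing (gamma b2)), A, B. reflexivity.
Qed.

Lemma der_nz gamma b : smooth_C gamma ->
  (forall (b : R) (g' : C), is_derive gamma b g' -> g' <> RtoC 0) ->
  0 < Derive (gx gamma) b * Derive (gx gamma) b + Derive (gy gamma) b * Derive (gy gamma) b.
Proof.
  intros Hs Hr. pose proof (Hr b _ (gamma_der gamma b Hs)) as H.
  destruct (Rle_or_lt (Derive (gx gamma) b * Derive (gx gamma) b + Derive (gy gamma) b * Derive (gy gamma) b) 0) as [L|L]; auto.
  exfalso. apply H. unfold RtoC. f_equal; nra.
Qed.

Lemma part1 gamma rho f : smooth_C gamma ->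
  (forall (b : R) (g' : C), is_derive gamma b g' -> g' <> RtoC 0) ->
  (forall b, 0 < rho b) -> (forall b, gamma b = (RtoC (rho b) * cis (f b))%C) ->
  lagrangian_immersion (Fmap gamma).
Proof.
  intros Hs Hr Hp Hpol p. exists (Lexp gamma p). split; [apply F_diff; auto|split].
  - intros [u1 u2] H. unfold Lexp, C2zero, RtoC in H. simpl in H.
    injection H. intros H4 H3 H2 H1.
    pose proof (der_nz gamma (snd p) Hs Hr) as ND.
    pose proof (gam_nz gamma rho f (snd p) Hp Hpol) as NG.
    pose proof s2_pos as Hk. pose proof (sc1 (fst p)) as T.
    set (X := gx gamma (snd p)) in *. set (Y := gy gamma (snd p)) in *.
    set (DX := Derive (gx gamma) (snd p)) in *. set (DY := Derive (gy gamma) (snd p)) in *.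
    set (c := cos (fst p)) in *. set (sn := sin (fst p)) in *.
    assert (P1 : - u1 * Y + u2 * DX = 0).
    { apply (Rmult_eq_reg_l s2); [|lra].
      transitivity (s2 * (- u1 * Y + u2 * DX) * (c * c + sn * sn)); [rewrite T; ring|].
      transitivity (0 * c + 0 * sn); [|ring]. rewrite <- H1 at 1. rewrite <- H2. ring. }
    assert (P2 : u1 * X + u2 * DY = 0).
    { apply (Rmult_eq_reg_l s2); [|lra].
      transitivity (s2 * (u1 * X + u2 * DY) * (c * c + sn * sn)); [rewrite T; ring|].
      transitivity (0 * c - 0 * sn); [|ring]. rewrite <- H1 at 2. rewrite <- H2. ring. }
    assert (Q1 : u1 * Y + u2 * DX = 0).
    { apply (Rmult_eq_reg_l s2); [|lra].
      transitivity (s2 * (u1 * Y + u2 * DX) * (c * c + sn * sn)); [rewrite T; ring|].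
      transitivity (0 * c - 0 * sn); [|ring]. rewrite <- H3 at 1. rewrite <- H4. ring. }
    assert (Q2 : - u1 * X + u2 * DY = 0).
    { apply (Rmult_eq_reg_l s2); [|lra].
      transitivity (s2 * (- u1 * X + u2 * DY) * (c * c + sn * sn)); [rewrite T; ring|].
      transitivity (0 * sn + 0 * c); [|ring]. rewrite <- H3 at 1. rewrite <- H4. ring. }
    assert (U2 : u2 = 0) by (apply (nz_cancel DX DY); auto; lra).
    subst u2.
    assert (U1 : u1 = 0) by (apply (nz_cancel X Y); auto; lra).
    subst. reflexivity.
  - intros u v. unfold omega, Lexp, Cconj, Cmult, Im. simpl. ring.
Qed.

Lemma cos_pi_add x : cos (x + PI) = - cos x.
Proof. rewrite cos_plus, cos_PI, sin_PI. ring. Qed.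
Lemma sin_pi_add x : sin (x + PI) = - sin x.
Proof. rewrite sin_plus, cos_PI, sin_PI. ring. Qed.

Lemma part2 gamma rho f a1 b1 a2 b2 :
  (forall b1 b2 : R, gamma b1 = gamma b2 -> cong2pi b1 b2) ->
  (forall b, 0 < rho b) -> (forall b, gamma b = (RtoC (rho b) * cis (f b))%C) ->
  Fmap gamma (a1, b1) = Fmap gamma (a2, b2) -> ~ torus_eq (a1, b1) (a2, b2) ->
  rho b1 = rho b2 /\ cong2pi (f b1) (f b2 + PI) /\ cong2pi a1 (a2 + PI).
Proof.
  intros Hs Hp Hpol HF HT.
  destruct (selfint gamma rho f a1 b1 a2 b2 Hs Hp Hpol HF HT) as (A & B & C & D).
  destruct (polar_xy gamma rho f b1 Hpol) as [X1 Y1].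
  destruct (polar_xy gamma rho f b2 Hpol) as [X2 Y2].
  pose proof (Hp b1). pose proof (Hp b2).
  pose proof (sc1 (f b1)). pose proof (sc1 (f b2)).
  assert (R : rho b1 = rho b2).
  { assert (E : rho b1 * rho b1 = rho b2 * rho b2).
    { replace (rho b1 * rho b1) with (gx gamma b1 * gx gamma b1 + gy gamma b1 * gy gamma b1).
      replace (rho b2 * rho b2) with (gx gamma b2 * gx gamma b2 + gy gamma b2 * gy gamma b2).
      rewrite A, B. ring.
      rewrite X2, Y2. transitivity (rho b2 * rho b2 * (cos (f b2) * cos (f b2) + sin (f b2) * sin (f b2))); [ring|]. rewrite H2; ring.
      rewrite X1, Y1. transitivity (rho b1 * rho b1 * (cos (f b1) * cos (f b1) + sin (f b1) * sin (f b1))); [ring|]. rewrite H1; ring. }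
    nra. }
  split; [exact R|split].
  - apply cong_of_cossin; rewrite ?cos_pi_add, ?sin_pi_add.
    + apply (Rmult_eq_reg_l (rho b1)); [|lra]. rewrite <- X1. rewrite R. rewrite <- Ropp_mult_distr_r, <- X2. lra.
    + apply (Rmult_eq_reg_l (rho b1)); [|lra]. rewrite <- Y1. rewrite R. rewrite <- Ropp_mult_distr_r, <- Y2. lra.
  - apply cong_of_cossin; rewrite ?cos_pi_add, ?sin_pi_add; lra.
Qed.

Lemma part3 gamma rho f (p1 p2 p3 : R * R) :
  (forall b1 b2 : R, gamma b1 = gamma b2 -> cong2pi b1 b2) ->
  (forall b, 0 < rho b) -> (forall b, gamma b = (RtoC (rho b) * cis (f b))%C) ->
  Fmap gamma p1 = Fmap gamma p2 -> Fmap gamma p1 = Fmap gamma p3 ->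
  ~ torus_eq p1 p2 -> ~ torus_eq p1 p3 -> torus_eq p2 p3.
Proof.
  intros Hs Hp Hpol F2 F3 T2 T3.
  destruct p1 as [a1 b1], p2 as [a2 b2], p3 as [a3 b3].
  destruct (selfint gamma rho f a1 b1 a2 b2 Hs Hp Hpol F2 T2) as (A & B & C & D).
  destruct (selfint gamma rho f a1 b1 a3 b3 Hs Hp Hpol F3 T3) as (A' & B' & C' & D').
  split; simpl.
  - apply cong_of_cossin; lra.
  - apply Hs. unfold gx, gy in *.
    rewrite (surjective_pairing (gamma b2)), (surjective_pairing (gamma b3)), A, B, A', B'. reflexivity.
Qed.

Definition phi (X Y c sn : R) (z : C2) : R :=
  let p1 := fst (fst z) in let q1 := snd (fst z) in
  let p2 := fst (snd z) in let q2 := snd (snd z) in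
  X*(p1*c + q1*sn - p2*c + q2*sn) + Y*(q1*c - p1*sn - p2*sn - q2*c).

Lemma part4 gamma rho f a1 b1 a2 b2 (L1 L2 : R * R -> C2) :
  smooth_C gamma ->
  (forall (b : R) (g' : C), is_derive gamma b g' -> g' <> RtoC 0) ->
  (forall b1 b2 : R, gamma b1 = gamma b2 -> cong2pi b1 b2) ->
  (forall b, 0 < rho b) -> (forall b, gamma b = (RtoC (rho b) * cis (f b))%C) ->
  Fmap gamma (a1, b1) = Fmap gamma (a2, b2) -> ~ torus_eq (a1, b1) (a2, b2) ->
  filterdiff (Fmap gamma) (locally (a1, b1)) L1 ->
  filterdiff (Fmap gamma) (locally (a2, b2)) L2 ->
  L1 (1, 0) = L2 (1, 0) /\ ~ transversal L1 L2 /\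
  (forall g1 g2 : C, is_derive gamma b1 g1 -> is_derive gamma b2 g2 ->
     (same_plane L1 L2 <-> Rparallel g1 g2)).
Proof.
  intros Hsm Hr Hs Hp Hpol HF HT HL1 HL2.
  destruct (selfint gamma rho f a1 b1 a2 b2 Hs Hp Hpol HF HT) as (A & B & C & D).
  pose proof (F_uniq _ _ _ Hsm HL1) as E1.
  pose proof (F_uniq _ _ _ Hsm HL2) as E2.
  pose proof (gam_nz gamma rho f b1 Hp Hpol) as NG.
  pose proof s2_pos as Hk. pose proof (sc1 a1) as T.
  split; [|split].
  - rewrite E1, E2. unfold Lexp; simpl. rewrite A, B, C, D. f_equal; f_equal; ring.
  - intros Tr.
    destruct (Tr ((gx gamma b1 * cos a1 - gy gamma b1 * sin a1, gx gamma b1 * sin a1 + gy gamma b1 * cos a1),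
                  (-(gx gamma b1 * cos a1 + gy gamma b1 * sin a1), -(gy gamma b1 * cos a1 - gx gamma b1 * sin a1))))
      as [u [v Hw]].
    rewrite E1, E2 in Hw. unfold Lexp, c2add, Cplus in Hw; simpl in Hw. rewrite A, B, C, D in Hw.
    apply (f_equal (phi (gx gamma b1) (gy gamma b1) (cos a1) (sin a1))) in Hw.
    unfold phi in Hw; simpl in Hw.
    match type of Hw with ?l = ?r =>
      assert (El : l = 2 * (gx gamma b1 * gx gamma b1 + gy gamma b1 * gy gamma b1) * (cos a1 * cos a1 + sin a1 * sin a1)) by ring;
      assert (Er : r = 0) by ring end.
    rewrite T in El. nra.
  - intros g1 g2 G1 G2.
    pose proof (uniq_R2 _ _ _ _ G1 (gamma_der gamma b1 Hsm)) as ->.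
    pose proof (uniq_R2 _ _ _ _ G2 (gamma_der gamma b2 Hsm)) as ->.
    pose proof (der_nz gamma b1 Hsm Hr) as N1.
    pose proof (der_nz gamma b2 Hsm Hr) as N2.
    split.
    + intros SP. destruct (proj2 (SP (L2 (0, 1))) (ex_intro _ (0, 1) eq_refl)) as [u Hu].
      rewrite E1, E2 in Hu. unfold Lexp in Hu; simpl in Hu. rewrite A, B, C, D in Hu.
      injection Hu. intros H4 H3 H2 H1.
      exists (snd u), 1. split; [right; lra|].
      unfold RtoC, Cmult, Cplus; simpl. f_equal.
      * apply (Rmult_eq_reg_l (2 * s2)); [|lra].
        transitivity (2 * s2 * (snd u * Derive (gx gamma) b1 + Derive (gx gamma) b2) * (cos a1 * cos a1 + sin a1 * sin a1)).
        rewrite T; ring.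
        match type of H1 with ?l1 = ?r1 => match type of H2 with ?l2 = ?r2 =>
        match type of H3 with ?l3 = ?r3 => match type of H4 with ?l4 = ?r4 =>
          transitivity ((r1 - l1) * cos a1 + (r2 - l2) * sin a1 + (r3 - l3) * cos a1 - (r4 - l4) * sin a1);
          [ring | rewrite H1, H2, H3, H4; ring] end end end end.
      * apply (Rmult_eq_reg_l (2 * s2)); [|lra].
        transitivity (2 * s2 * (snd u * Derive (gy gamma) b1 + Derive (gy gamma) b2) * (cos a1 * cos a1 + sin a1 * sin a1)).
        rewrite T; ring.
        match type of H1 with ?l1 = ?r1 => match type of H2 with ?l2 = ?r2 =>
        match type of H3 with ?l3 = ?r3 => match type of H4 with ?l4 = ?r4 =>
          transitivity ((r2 - l2) * cos a1 - (r1 - l1) * sin a1 + (r3 - l3) * sin a1 + (r4 - l4) * cos a1);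
          [ring | rewrite H1, H2, H3, H4; ring] end end end end.
    + intros [a [b [Hab Hpar]]].
      unfold RtoC, Cmult, Cplus in Hpar; simpl in Hpar. injection Hpar. intros P2 P1.
      assert (Hb : b <> 0).
      { intros ->. destruct Hab as [Ha|Ha]; [|lra].
        assert (Derive (gx gamma) b1 = 0 /\ Derive (gy gamma) b1 = 0) as [Z1 Z2].
        { split; apply (Rmult_eq_reg_l a); auto; lra. }
        rewrite Z1, Z2 in N1. lra. }
      assert (Ha : a <> 0).
      { intros ->.
        assert (Derive (gx gamma) b2 = 0 /\ Derive (gy gamma) b2 = 0) as [Z1 Z2].
        { split; apply (Rmult_eq_reg_l b); auto; lra. }
        rewrite Z1, Z2 in N2. lra. }
      assert (DX : Derive (gx gamma) b2 = (- a / b) * Derive (gx gamma) b1).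
      { apply (Rmult_eq_reg_l b); auto.
        replace (b * (- a / b * Derive (gx gamma) b1)) with (- (a * Derive (gx gamma) b1)) by (field; auto). lra. }
      assert (DY : Derive (gy gamma) b2 = (- a / b) * Derive (gy gamma) b1).
      { apply (Rmult_eq_reg_l b); auto.
        replace (b * (- a / b * Derive (gy gamma) b1)) with (- (a * Derive (gy gamma) b1)) by (field; auto). lra. }
      intros w. split; intros [[u1 u2] Hu]; subst w.
      * exists (u1, u2 * b / a). rewrite E1, E2. unfold Lexp; simpl. rewrite A, B, C, D, DX, DY.
        f_equal; f_equal; field; auto.
      * exists (u1, a / b * u2). rewrite E1, E2. unfold Lexp; simpl. rewrite A, B, C, D, DX, DY.
        f_equal; f_equal; field; auto.
Qed.

Theorem mainTheorem13 (gamma : R -> C) (rho f : R -> R)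
  (Hsmooth : smooth_C gamma)
  (Hper : forall b : R, gamma (b + 2 * PI) = gamma b)
  (Hreg : forall (b : R) (g' : C), is_derive gamma b g' -> g' <> RtoC 0)
  (Hsimple : forall b1 b2 : R, gamma b1 = gamma b2 -> cong2pi b1 b2)
  (Hrho_smooth : smooth_R rho) (Hf_smooth : smooth_R f)
  (Hrho_pos : forall b : R, 0 < rho b)
  (Hpolar : forall b : R, gamma b = (RtoC (rho b) * cis (f b))%C) :
  lagrangian_immersion (Fmap gamma) /\
  (forall a1 b1 a2 b2 : R,
     Fmap gamma (a1, b1) = Fmap gamma (a2, b2) -> ~ torus_eq (a1, b1) (a2, b2) ->
     rho b1 = rho b2 /\ cong2pi (f b1) (f b2 + PI) /\ cong2pi a1 (a2 + PI)) /\
  (forall p1 p2 p3 : R * R,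
     Fmap gamma p1 = Fmap gamma p2 -> Fmap gamma p1 = Fmap gamma p3 ->
     ~ torus_eq p1 p2 -> ~ torus_eq p1 p3 -> torus_eq p2 p3) /\
  (forall (a1 b1 a2 b2 : R) (L1 L2 : R * R -> C2),
     Fmap gamma (a1, b1) = Fmap gamma (a2, b2) -> ~ torus_eq (a1, b1) (a2, b2) ->
     filterdiff (Fmap gamma) (locally (a1, b1)) L1 ->
     filterdiff (Fmap gamma) (locally (a2, b2)) L2 ->
     L1 (1, 0) = L2 (1, 0) /\
     ~ transversal L1 L2 /\
     (forall g1 g2 : C, is_derive gamma b1 g1 -> is_derive gamma b2 g2 ->
        (same_plane L1 L2 <-> Rparallel g1 g2))).
Proof.
  split; [|split; [|split]].
  - exact (part1 gamma rho f Hsmooth Hreg Hrho_pos Hpolar).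
  - intros. eapply part2; eauto.
  - intros. eapply part3; eauto.
  - intros. eapply part4; eauto.
Qed.
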